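(* With the areas $A(j,r)$ constructed below, for every $\langle j,r\rangle\in\Pi$ we have $A(j,r)\subseteq B(j,7\cdot 5^r)$.
   Context: $(V,d)$ is a metric space of diameter $W$, $F\subseteq V$ a finite set of facilities with opening costs $f_j>0$, $f_{\min}=\min_j f_j$, $B(x,\rho)=\{y\in V:d(x,y)\le\rho\}$. Let $\rho_{\min}=\lfloor\log_5 f_{\min}\rfloor$, $\rho_{\max}=\lceil\log_5 W\rceil$. For each integer $r\in[\rho_{\min},\rho_{\max}]$, let $J'_r=\{j\in F:f_j\le 5^r\}$ and let $J_r$ be a maximal subset of $J'_r$ such that any two facilities of $J_r$ are at distance greater than $5^{r+1}$. $\Pi=\{\langle j,r\rangle:\rho_{\min}\le r\le\rho_{\max},\ j\in J_r\}$. The tree $\mathcal{T}$ on $\Pi$ has as root the unique pair with $r=\rho_{\max}$, and for $r<\rho_{\max}$, $\mathrm{parent}(j,r)=\langle j',r+1\rangle$ where $j'$ is a facility of $J_{r+1}$ closest to $j$ (ties arbitrary). Areas: initialize $A(j,r)=\emptyset$ for all $\langle j,r\rangle\in\Pi$; for each point $p\in V$ lying in some ball $B(j,7\cdot 5^r)$ with $\langle j,r\rangle\in\Pi$, let $r^*$ be the minimum $r$ for which there is a pair $\langle j,r^*\rangle\in\Pi$ with $p\in B(j,7\cdot5^{r^*})$, let $\langle j^*,r^*\rangle$ be such a pair minimizing $d(p,j^* )$, and add $p$ to $A(j^*,r^* )$ and to $A(j',r')$ for every ancestor $\langle j',r'\rangle$ of $\langle j^*,r^*\rangle$ in $\mathcal{T}$.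 *)

(* Defs.v *)
From HB Require Import structures.
From mathcomp Require Import all_boot all_order all_algebra.
From mathcomp Require Import all_classical all_reals all_analysis.
Set Implicit Arguments. Unset Strict Implicit. Unset Printing Implicit Defensive.
Import Order.TTheory GRing.Theory Num.Theory.
Local Open Scope classical_set_scope.
Local Open Scope ring_scope.

Section Defs.
Context {R : realType} {V : Type}.
Implicit Types (d : V -> V -> R) (F : set V) (f : V -> R) (J : int -> set V).

Definition is_metric d :=
  [/\ (forall x y, 0 <= d x y), (forall x y, d x y = 0 <-> x = y),
      (forall x y, d x y = d y x) & (forall x y z, d x z <= d x y + d y z)].

Definition is_diameter d (W : R) :=
  (forall x y, d x y <= W) /\ (forall w, (forall x y, d x y <= w) -> W <= w).

Definition mball d (x : V) (rho : R) : set V := [set y | d x y <= rho].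

Definition is_min_cost F f (fmin : R) :=
  (exists2 j, F j & f j = fmin) /\ (forall j, F j -> fmin <= f j).

Definition log5 (x : R) : R := ln x / ln 5.
Definition rho_min (fmin : R) : int := Num.floor (log5 fmin).
Definition rho_max (W : R) : int := Num.ceil (log5 W).

Definition Jprime F f (r : int) : set V := [set j | F j /\ f j <= (5 : R) ^ r].

Definition separated d (r : int) (S : set V) :=
  forall a b, S a -> S b -> a <> b -> (5 : R) ^ (r + 1) < d a b.

Definition maximal_sep d F f (r : int) (S : set V) :=
  [/\ S `<=` Jprime F f r, separated d r S &
      forall S', S `<=` S' -> S' `<=` Jprime F f r -> separated d r S' -> S' = S].

Definition inPi (rmin rmax : int) J (j : V) (r : int) :=
  (rmin <= r <= rmax)%R /\ J r j.

(* parent(j,r) = <parent j r, r+1>, with parent j r a closest facility of J_{r+1} *)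
Definition is_parent d (rmin rmax : int) J (parent : V -> int -> V) :=
  forall j r, inPi rmin rmax J j r -> (r < rmax)%R ->
    J (r + 1) (parent j r) /\
    (forall j', J (r + 1) j' -> d j (parent j r) <= d j j').

Fixpoint anc (parent : V -> int -> V) (k : nat) (j : V) (r : int) : V * int :=
  match k with
  | 0 => (j, r)
  | k'.+1 => let: (j', r') := anc parent k' j r in (parent j' r', r' + 1)
  end.

Definition covered d rmin rmax J (p : V) :=
  exists j r, inPi rmin rmax J j r /\ mball d j (7 * (5 : R) ^ r) p.

Definition is_rstar d rmin rmax J (rstar : V -> int) :=
  forall p, covered d rmin rmax J p ->
    (exists j, inPi rmin rmax J j (rstar p) /\ mball d j (7 * (5 : R) ^ (rstar p)) p) /\
    (forall j r, inPi rmin rmax J j r -> mball d j (7 * (5 : R) ^ r) p -> (rstar p <= r)%R).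

Definition is_jstar d rmin rmax J (rstar : V -> int) (jstar : V -> V) :=
  forall p, covered d rmin rmax J p ->
    [/\ inPi rmin rmax J (jstar p) (rstar p),
        mball d (jstar p) (7 * (5 : R) ^ (rstar p)) p &
        forall j, inPi rmin rmax J j (rstar p) -> mball d j (7 * (5 : R) ^ (rstar p)) p ->
          d p (jstar p) <= d p j].

(* A(j,r): p is added to A(jstar,rstar) and to all its ancestors in the tree *)
Definition area d rmin rmax J parent rstar jstar (j : V) (r : int) : set V :=
  [set p | covered d rmin rmax J p /\
           exists k : nat, anc parent k (jstar p) (rstar p) = (j, r)].

End Defs.

(* Main.v *)
Require Import Defs.
From HB Require Import structures.
From mathcomp Require Import all_boot all_order all_algebra.
From mathcomp Require Import all_classical all_reals all_analysis.
From mathcomp Require Import lra.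
Import Order.TTheory GRing.Theory Num.Theory.
Local Open Scope classical_set_scope.
Local Open Scope ring_scope.


Lemma pow5S (R : realType) (r : int) : (5 : R) ^ (r + 1) = (5 : R) ^ r * 5.
Proof. by rewrite exprzDr ?expr1z // unitfE pnatr_eq0. Qed.

Lemma pow5_gt0 (R : realType) (r : int) : 0 < (5 : R) ^ r.
Proof. by apply: exprz_gt0. Qed.

Theorem lemma5 (R : realType) (V : Type) (d : V -> V -> R) (W : R)
  (F : set V) (f : V -> R) (fmin : R) (J : int -> set V)
  (parent : V -> int -> V) (rstar : V -> int) (jstar : V -> V) :
  is_metric d -> is_diameter d W ->
  finite_set F -> (forall j, F j -> 0 < f j) -> is_min_cost F f fmin ->
  (forall r : int, (rho_min fmin <= r <= rho_max W)%R -> maximal_sep d F f r (J r)) ->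
  is_parent d (rho_min fmin) (rho_max W) J parent ->
  is_rstar d (rho_min fmin) (rho_max W) J rstar ->
  is_jstar d (rho_min fmin) (rho_max W) J rstar jstar ->
  forall (j : V) (r : int), inPi (rho_min fmin) (rho_max W) J j r ->
    area d (rho_min fmin) (rho_max W) J parent rstar jstar j r
      `<=` mball d j (7 * (5 : R) ^ r).
Proof.
move=> [d0 dE dC dT] _ _ _ _ Hmax Hpar _ Hjs j r [/andP[rlo rhi] Jr] p [cov [k Hk]].
have [Pi0 B0 _] := Hjs p cov.
set rmin := rho_min fmin in Pi0 Hmax Hpar rlo *.
set rmax := rho_max W in Pi0 Hmax Hpar rhi *.
have close : forall j' r', inPi rmin rmax J j' r' -> (r' < rmax)%R ->
    exists2 j'', J (r' + 1) j'' & d j' j'' <= (5 : R) ^ (r' + 1 + 1).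
  move=> j' r' [/andP[lo hi] Jj'] lt.
  have rng : (rmin <= r' + 1 <= rmax)%R.
    apply/andP; split; first by apply: (le_trans lo); rewrite lerDl.
    by rewrite -ltzD1 ltrD2r.
  have [sub sep maxl] := Hmax _ rng.
  have [sub0 _ _] := Hmax _ (introT andP (conj lo hi)).
  apply: contrapT => Hno.
  have Hfar : forall j'', J (r' + 1) j'' -> (5 : R) ^ (r' + 1 + 1) < d j' j''.
    move=> j'' Jj''; rewrite ltNge; apply/negP => le; apply: Hno; by exists j''.
  have := maxl (J (r' + 1) `|` [set j']).
  have Jp : Jprime F f (r' + 1) j'.
    have [Fj fj] := sub0 _ Jj'; split => //.
    apply: (le_trans fj); rewrite pow5S ler_peMr ?(ltW (pow5_gt0 _ _)) //.
    by rewrite (_ : 1 = 1%:R) // ler_nat.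
  move=> /(_ (fun x h => or_introl h)).
  have Hs : J (r' + 1) `|` [set j'] `<=` Jprime F f (r' + 1).
    by move=> x [/sub //|->].
  move=> /(_ Hs).
  have Hsep : Defs.separated d (r' + 1) (J (r' + 1) `|` [set j']).
    move=> a b [Ja|->] [Jb|->] ab.
    - exact: sep.
    - by rewrite dC; apply: Hfar.
    - by apply: Hfar.
    - by [].
  move=> /(_ Hsep) Heq.
  have : J (r' + 1) j' by rewrite -Heq; right.
  move=> /Hfar; rewrite (proj2 (dE j' j') erefl) => h.
  by move: (pow5_gt0 R (r' + 1 + 1)); rewrite ltNge (ltW h).
have inv : forall i : nat, let a := anc parent i (jstar p) (rstar p) in
   a.2 = rstar p + i%:Z /\
   ((a.2 <= rmax)%R -> inPi rmin rmax J a.1 a.2 /\ d a.1 p <= 7 * (5 : R) ^ a.2).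
  elim=> [|i IH] /=; first by split; [rewrite addr0 | ].
  case E: (anc parent i (jstar p) (rstar p)) => [j' r'] in IH *.
  move: IH => /= [er H]; split; first by rewrite er -addn1 PoszD addrA.
  move=> le.
  have lt : (r' < rmax)%R by rewrite -lezD1.
  have [Pi' Bd] := H (ltW lt).
  have [Jp closest] := Hpar _ _ Pi' lt.
  split.
    split => //; apply/andP; split => //.
    by apply: (le_trans (proj1 (andP (proj1 Pi')))); rewrite lerDl.
  have [j'' Jj'' dj''] := close _ _ Pi' lt.
  have h1 := closest _ Jj''.
  apply: (le_trans (dT _ j' _)); rewrite dC.
  move: Bd dj'' h1; rewrite !pow5S.
  have := pow5_gt0 R r'; set x := (5 : R) ^ r' => xp.
  move=> a b c; lra.
have [e H] := inv k; rewrite Hk /= in e H.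
exact: (proj2 (H rhi)).
Qed.
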